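(* Let $M$ be a finite monoid. Then the following are equivalent: (a) $M$ is a group; (b) $M$ is strongly sofic; (c) $M$ has no non-trivial idempotents (no $e\in M$ with $e^2=e\ne1_M$).
   Context: Hamming metric on $\operatorname{Map}(D)$ (monoid of maps $D\to D$, $D$ finite non-empty): $d_D^{\mathrm{Ham}}(f,g)=\frac{1}{|D|}|\{v:f(v)\ne g(v)\}|$. A monoid $M$ is strongly sofic if for every finite $K\subset M$ there is an integer $\Delta_K\ge1$ such that for every $\varepsilon>0$ there exist a non-empty finite set $D$ and a map $\sigma\colon M\to\operatorname{Map}(D)$ with (1) $\sigma(1_M)=\mathrm{Id}_D$; (2) $d_D^{\mathrm{Ham}}(\sigma(k_1k_2),\sigma(k_1)\sigma(k_2))\le\varepsilon$ for $k_1,k_2\in K$; (3) $d_D^{\mathrm{Ham}}(\sigma(k_1),\sigma(k_2))\ge1-\varepsilon$ for distinct $k_1,k_2\in K$; (4) $|\sigma(k)^{-1}(v)|\le\Delta_K$ for $k\in K$, $v\in D$. *)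

(* Defs.v *)
From mathcomp Require Import all_boot all_order all_algebra.
From mathcomp Require Import reals.
Set Implicit Arguments. Unset Strict Implicit. Unset Printing Implicit Defensive.
Import Order.TTheory GRing.Theory Num.Theory.
Local Open Scope ring_scope.

Definition is_monoid (M : Type) (mul : M -> M -> M) (one : M) : Prop :=
  [/\ forall x y z, mul x (mul y z) = mul (mul x y) z,
      forall x, mul one x = x & forall x, mul x one = x].

Definition monoid_is_group (M : Type) (mul : M -> M -> M) (one : M) : Prop :=
  forall x, exists y, mul x y = one /\ mul y x = one.

Definition no_nontrivial_idempotent (M : Type) (mul : M -> M -> M) (one : M)
  : Prop := forall e, mul e e = e -> e = one.

Definition hamming (R : realType) (D : finType) (f g : D -> D) : R :=
  #|[set v : D | f v != g v]|%:R / #|D|%:R.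

Definition strongly_sofic (R : realType) (M : finType)
  (mul : M -> M -> M) (one : M) : Prop :=
  forall K : {set M}, exists Delta : nat, (1 <= Delta)%N /\
    forall eps : R, 0 < eps ->
    exists (D : finType) (sigma : M -> D -> D),
      [/\ (0 < #|D|)%N,
          sigma one = id,
          (forall k1 k2, k1 \in K -> k2 \in K ->
             hamming R (sigma (mul k1 k2)) (sigma k1 \o sigma k2) <= eps),
          (forall k1 k2, k1 \in K -> k2 \in K -> k1 != k2 ->
             1 - eps <= hamming R (sigma k1) (sigma k2)) &
          (forall k v, k \in K -> (#|[set u : D | sigma k u == v]| <= Delta)%N)].

(* Main.v *)
Require Import Defs.
From mathcomp Require Import all_boot all_order all_algebra.
From mathcomp Require Import reals boolp.
From mathcomp Require Import zify ring lra.
Import Order.TTheory GRing.Theory Num.Theory.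

Section Mon.
Variables (M : finType) (mul : M -> M -> M) (one : M).
Hypothesis hM : is_monoid mul one.

Definition pw x n := iter n (mul x) one.

Lemma pwD x a b : pw x (a + b) = mul (pw x a) (pw x b).
Proof.
case: hM => hA h1 h2.
elim: a => [|a IH]; first by rewrite add0n /pw /= h1.
by rewrite addSn /pw !iterS -!/(pw x _) IH hA.
Qed.

Lemma pw1 x : pw x 1 = x.
Proof. by case: hM => _ _ h2; rewrite /pw /= h2. Qed.

Lemma pw_collide x : exists i j, (i < j)%N /\ pw x i = pw x j.
Proof.
pose f (k : 'I_(#|M|.+1)) := pw x k.
have: ~ injective f.
  by move=> /leq_card; rewrite card_ord ltnn.
move=> ninj.
case: (boolP [exists i, exists j, (i != j) && (f i == f j)]).
  move=> /existsP [i /existsP [j /andP [nij /eqP fij]]].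
  case: (ltngtP i j) => [lt|gt|eq].
  - by exists i, j.
  - by exists j, i.
  - by move: nij; rewrite (val_inj eq) eqxx.
move=> /existsPn H; exfalso; apply: ninj => i j fij.
apply/eqP; apply: contraNT (H i) => nij.
by apply/existsP; exists j; rewrite nij fij eqxx.
Qed.

Lemma idem_pow x : exists m, (0 < m)%N /\ mul (pw x m) (pw x m) = pw x m.
Proof.
have [i [j [lt e]]] := pw_collide x.
have [p p0 ej] : exists2 p, (0 < p)%N & j = (i + p)%N by exists (j - i)%N; lia.
subst j.
have per : forall q r, pw x (i + q * p + r) = pw x (i + r).
  elim=> [|q IH] r; first by rewrite mul0n addn0.
  have -> : (i + q.+1 * p + r = i + p + (q * p + r))%N by nia.
  by rewrite pwD -e -pwD addnA IH.
exists (i.+1 * p)%N; split; first by nia.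
rewrite -pwD.
have -> : (i.+1 * p + i.+1 * p = i + i.+1 * p + (i.+1 * p - i))%N by nia.
by rewrite per; congr pw; nia.
Qed.

Lemma N_G : no_nontrivial_idempotent mul one -> monoid_is_group mul one.
Proof.
move=> hN x.
have [m [m0 idm]] := idem_pow x.
have e1 := hN _ idm.
exists (pw x m.-1); split.
  by rewrite -{1}(pw1 x) -pwD add1n prednK.
by rewrite -{2}(pw1 x) -pwD addn1 prednK.
Qed.

Lemma G_N : monoid_is_group mul one -> no_nontrivial_idempotent mul one.
Proof.
case: hM => hA h1 h2 hG e ee.
have [y [ey ye]] := hG e.
by rewrite -ye -{2}ee hA ye h1.
Qed.
End Mon.
Section Real.
Variable R : realType.
Local Open Scope ring_scope.

Lemma ham_le (S n N : nat) : (0 < n)%N -> (0 < N)%N ->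
  S%:R / n%:R <= N%:R^-1 :> R -> (S * N <= n)%N.
Proof.
move=> n0 N0; rewrite ler_pdivrMr ?ltr0n // => h.
by move: h; rewrite mulrC ler_pdivlMr ?ltr0n // -natrM ler_nat.
Qed.

Lemma ham_ge (S n N : nat) : (0 < n)%N -> (0 < N)%N ->
  1 - N%:R^-1 <= S%:R / n%:R :> R -> (n * N <= S * N + n)%N.
Proof.
move=> n0 N0; rewrite ler_pdivlMr ?ltr0n // => h.
rewrite -(ler_nat R) natrD !natrM.
have := ler_wpM2r (ler0n R N) h.
have NZ : N%:R != 0 :> R by rewrite pnatr_eq0 -lt0n.
have -> : (1 - N%:R^-1) * n%:R * N%:R = n%:R * N%:R - n%:R :> R by field.
move=> h2; lra.
Qed.
End Real.
Lemma preim_card (D : finType) (s : D -> D) (X : {set D}) (Delta : nat) :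
  (forall v, #|[set u | s u == v]| <= Delta)%N -> (#|s @^-1: X| <= #|X| * Delta)%N.
Proof.
move=> hD.
rewrite -sum1_card (partition_big s (mem X)); last by move=> i; rewrite inE.
rewrite -sum_nat_const leq_sum // => j jX.
rewrite sum1_card; apply: leq_trans (hD j); apply: subset_leq_card.
by apply/subsetP => u; rewrite !inE => /andP [].
Qed.

Lemma S_N (R : realType) (M : finType) (mul : M -> M -> M) (one : M) :
  is_monoid mul one -> strongly_sofic R mul one -> no_nontrivial_idempotent mul one.
Proof.
move=> hM hS e ee; apply/eqP; apply: contraT => ne.
have [Delta [D1 H]] := hS [set one; e].
pose N := (Delta + 3)%N.
have N0 : (0 < N)%N by rewrite /N; lia.
have eps0 : (0 < N%:R^-1 :> R)%R by rewrite invr_gt0 ltr0n.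
have [D [sigma [n0 s1 h3 h4 h5]]] := H _ eps0.
have eK : e \in [set one; e] by rewrite !inE eqxx orbT.
have oK : one \in [set one; e] by rewrite !inE eqxx.
have hA := h3 e e eK eK; rewrite ee /hamming in hA.
have hF := h4 one e oK eK ltac:(by rewrite eq_sym); rewrite s1 /hamming in hF.
set s := sigma e in hA hF.
set A := [set v | _] in hA.
set F := [set v | _] in hF.
have a1 := @ham_le R _ _ _ n0 N0 hA.
have f1 := @ham_ge R _ _ _ n0 N0 hF.
have cF := cardsC F.
have cov : (#|D| <= #|A| + #|~:F| + #|s @^-1: ~:F|)%N.
  have sub : [set: D] \subset A :|: ~:F :|: s @^-1: ~:F.
    apply/subsetP => v _; rewrite !inE /=.
    by case: (s v != s (s v)); rewrite ?orbT.
  rewrite -cardsT; apply: leq_trans (subset_leq_card sub) _.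
  apply: leq_trans (leq_card_setU _ _) _; rewrite leq_add2r.
  exact: leq_card_setU.
have pc := @preim_card _ s (~:F) _ (fun v => h5 e v eK).
have c1 : (#|~:F| * N <= #|D|)%N by nia.
have c2 : (#|D| * N <= #|A| * N + #|~:F| * N + #|~:F| * Delta * N)%N by nia.
have c3 : (#|~:F| * Delta * N <= #|D| * Delta)%N.
  by rewrite mulnAC leq_mul2r c1 orbT.
move: c2; rewrite /N; nia.
Qed.

Lemma G_S (R : realType) (M : finType) (mul : M -> M -> M) (one : M) :
  is_monoid mul one -> monoid_is_group mul one -> strongly_sofic R mul one.
Proof.
move=> [hA h1 h2] hG K; exists 1%N; split => // eps e0.
exists M, mul; split.
- by apply/card_gt0P; exists one.
- by apply: funext => x; exact: h1.
- move=> k1 k2 _ _; rewrite /hamming.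
  have -> : [set v | mul (mul k1 k2) v != (mul k1 \o mul k2) v] = set0.
    by apply/setP => v; rewrite !inE /= hA eqxx.
  by rewrite cards0 mul0r; exact: ltW.
- move=> k1 k2 _ _ nk; rewrite /hamming.
  have -> : [set v | mul k1 v != mul k2 v] = setT.
    apply/setP => v; rewrite !inE; apply: contra nk => /eqP h.
    have [y [vy yv]] := hG v.
    by rewrite -(h2 k1) -vy hA h -hA vy h2.
  have n0 : (#|M|%:R != 0 :> R)%R.
    by rewrite pnatr_eq0 -lt0n; apply/card_gt0P; exists one.
  rewrite cardsT divff //.
  by rewrite lerBlDr lerDl ltW.
- move=> k v _; have [y [ky yk]] := hG k.
  apply: leq_trans (_ : #|[set mul y v]| <= 1)%N; last by rewrite cards1.
  apply: subset_leq_card; apply/subsetP => u; rewrite !inE => /eqP <-.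
  by rewrite hA yk h1.
Qed.

Theorem corollary3p17 (R : realType) (M : finType) (mul : M -> M -> M) (one : M) :
  is_monoid mul one ->
  (monoid_is_group mul one <-> strongly_sofic R mul one) /\
  (strongly_sofic R mul one <-> no_nontrivial_idempotent mul one).
Proof.
move=> hM; split; split.
- exact: G_S.
- by move=> hS; exact: (@N_G M mul one hM (@S_N R M mul one hM hS)).
- exact: S_N.
- by move=> hN; exact: (@G_S R M mul one hM (@N_G M mul one hM hN)).
Qed.
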